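(* Let $d\ge 1$, let $0<s_0<s_1$ and $0<\alpha_0<\alpha_1$, set $W=[s_0,s_1]\times[\alpha_0,\alpha_1]$, and let $g\in L^2_0(\mathbb{T}^d;\mathbb{C})$ with Fourier coefficients $(\hat g_k)_{k\in\mathbb{Z}^d}$. Define $\mathcal{S}:W\to\ell^2(\mathbb{Z}^d)$ by $$\mathcal{S}(s,\alpha)=\Big(\frac{\alpha}{\alpha+|k|^{2s}}\,\hat g_k\Big)_{k\in\mathbb{Z}^d}.$$ Then $\mathcal{S}$ is twice Fréchet differentiable on $W$ (in particular continuous). For $h_1,h_2\in\mathbb{R}$ its partial derivatives up to order two are given by $\partial_s\mathcal{S}(s,\alpha)[h_1]=h_1\partial_s\mathcal{S}(s,\alpha)$, $\partial_s^2\mathcal{S}(s,\alpha)[h_1,h_2]=h_1h_2\partial_s^2\mathcal{S}(s,\alpha)$, $\partial_\alpha\mathcal{S}(s,\alpha)[h_1]=h_1\partial_\alpha\mathcal{S}(s,\alpha)$, $\partial_\alpha^2\mathcal{S}(s,\alpha)[h_1,h_2]=h_1h_2\partial_\alpha^2\mathcal{S}(s,\alpha)$, $\partial_{\alpha,s}\mathcal{S}(s,\alpha)[h_1,h_2]=h_1h_2\partial_{\alpha,s}\mathcal{S}(s,\alpha)$, where the following sequences are indexed by $k\in\mathbb{Z}^d\setminus\{0\}$ (the $k=0$ entries being $0$): $$\partial_s\mathcal{S}(s,\alpha)=\Big(-\frac{2\alpha|k|^{2s}\ln|k|}{(|k|^{2s}+\alpha)^2}\hat g_k\Big)_k,\qquad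 \partial_s^2\mathcal{S}(s,\alpha)=\Big(\frac{4\alpha|k|^{2s}(\ln|k|)^2(|k|^{2s}-\alpha)}{(\alpha+|k|^{2s})^3}\hat g_k\Big)_k,$$ $$\partial_\alpha\mathcal{S}(s,\alpha)=\Big(\frac{|k|^{2s}}{(|k|^{2s}+\alpha)^2}\hat g_k\Big)_k,\qquad \partial_\alpha^2\mathcal{S}(s,\alpha)=\Big(\frac{-2|k|^{2s}}{(|k|^{2s}+\alpha)^3}\hat g_k\Big)_k,$$ $$\partial_{\alpha,s}\mathcal{S}(s,\alpha)=\Big(\frac{-2|k|^{2s}\ln|k|\,(|k|^{2s}-\alpha)}{(|k|^{2s}+\alpha)^3}\hat g_k\Big)_k.$$
   Context: $\mathbb{T}^d=\mathbb{R}^d/(2\pi\mathbb{Z})^d$; $L^2_0(\mathbb{T}^d;\mathbb{C})$ denotes the square-integrable complex functions with zero mean. With $\varphi^k(x)=e^{ik\cdot x}$, the Fourier coefficients are $\hat u_k=(u,\varphi^k)_{L^2}=\int_{\mathbb{T}^d}u\,\overline{\varphi^k}\,dx$, so that $u=(2\pi)^{-d}\sum_k\hat u_k\varphi^k$. The convention $|0|^{2s}=0$ is used, so the $k=0$ entry of $\mathcal{S}(s,\alpha)$ is $\hat g_0=0$. $\mathcal{S}(s,\alpha)$ is the Fourier coefficient sequence of the solution $u$ of $(-\Delta)^s u+\alpha u=\alpha g$. *)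

(* Defs.v *)
From HB Require Import structures.
From mathcomp Require Import all_boot all_order all_algebra.
From mathcomp Require Import all_classical all_reals all_analysis.
From mathcomp Require Import complex.
Set Implicit Arguments. Unset Strict Implicit. Unset Printing Implicit Defensive.
Import Order.TTheory GRing.Theory Num.Theory.
Local Open Scope complex_scope.
Local Open Scope ring_scope.
Local Open Scope classical_set_scope.

Definition freq (d : nat) := 'rV[int]_d.

Section Defs.
Variable R : realType.

Definition knorm (d : nat) (k : freq d) : R :=
  Num.sqrt (\sum_(i < d) ((k ord0 i)%:~R : R) ^+ 2).

Definition cmod2 (z : R[i]) : R := (complex.Re z) ^+ 2 + (complex.Im z) ^+ 2.

Definition l2norm2 (d : nat) (u : freq d -> R[i]) : \bar R :=
  (\esum_(k in [set: freq d]) (cmod2 (u k))%:E)%E.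

Definition in_l2 (d : nat) (u : freq d -> R[i]) : Prop := (l2norm2 u < +oo)%E.

(* l^2 norm (meaningful for u in l^2) *)
Definition l2norm (d : nat) (u : freq d -> R[i]) : R := Num.sqrt (fine (l2norm2 u)).

Definition nrm2 (h : R * R) : R := Num.sqrt (h.1 ^+ 2 + h.2 ^+ 2).

Definition shift (p h : R * R) : R * R := (p.1 + h.1, p.2 + h.2).

(* The map S(s, alpha) = (alpha / (alpha + |k|^{2s}) ghat_k)_k.
   powR 0 x = 0 for x <> 0, matching the convention |0|^{2s} = 0. *)
Definition Ssol (d : nat) (g : freq d -> R[i]) (p : R * R) : freq d -> R[i] :=
  fun k => ((p.2 / (p.2 + knorm k `^ (2 * p.1)))%:C * g k).

Definition dS_s (d : nat) (g : freq d -> R[i]) (p : R * R) : freq d -> R[i] :=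
  fun k => if k == 0 then 0 else
    let x := knorm k `^ (2 * p.1) in let a := p.2 in
    ((- (2 * a * x * ln (knorm k)) / (x + a) ^+ 2)%:C * g k).

Definition dS_ss (d : nat) (g : freq d -> R[i]) (p : R * R) : freq d -> R[i] :=
  fun k => if k == 0 then 0 else
    let x := knorm k `^ (2 * p.1) in let a := p.2 in
    ((4 * a * x * (ln (knorm k)) ^+ 2 * (x - a) / (a + x) ^+ 3)%:C * g k).

Definition dS_a (d : nat) (g : freq d -> R[i]) (p : R * R) : freq d -> R[i] :=
  fun k => if k == 0 then 0 else
    let x := knorm k `^ (2 * p.1) in let a := p.2 in
    ((x / (x + a) ^+ 2)%:C * g k).

Definition dS_aa (d : nat) (g : freq d -> R[i]) (p : R * R) : freq d -> R[i] :=
  fun k => if k == 0 then 0 else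
    let x := knorm k `^ (2 * p.1) in let a := p.2 in
    ((- 2 * x / (x + a) ^+ 3)%:C * g k).

Definition dS_as (d : nat) (g : freq d -> R[i]) (p : R * R) : freq d -> R[i] :=
  fun k => if k == 0 then 0 else
    let x := knorm k `^ (2 * p.1) in let a := p.2 in
    ((- 2 * x * ln (knorm k) * (x - a) / (x + a) ^+ 3)%:C * g k).

(* F : R^2 -> l^2 is Frechet differentiable within W at p with derivative
   the bounded linear map DF(p)[h] = h1 * A + h2 * B (A, B in l^2):
   || F(p+h) - F(p) - (h1 A + h2 B) || = o(|h|) as h -> 0 with p + h in W. *)
Definition frechet_within (d : nat) (W : set (R * R)) (F : R * R -> freq d -> R[i])
    (p : R * R) (A B : freq d -> R[i]) : Prop :=
  in_l2 A /\ in_l2 B /\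
  forall e : R, 0 < e -> exists2 delta : R, 0 < delta &
    forall h : R * R, W (shift p h) -> nrm2 h < delta ->
      in_l2 (fun k => F (shift p h) k - F p k - (h.1%:C * A k + h.2%:C * B k)) /\
      l2norm (fun k => F (shift p h) k - F p k - (h.1%:C * A k + h.2%:C * B k))
        <= e * nrm2 h.

(* The first derivative DF : W -> L(R^2, l^2), DF(q)[k] = k1 A(q) + k2 B(q), is
   Frechet differentiable within W at p with second derivative
   D2F(p)[h][k] = h1 k1 Css + (h1 k2 + h2 k1) Csa + h2 k2 Caa, i.e.
   || DF(p+h) - DF(p) - D2F(p)[h] ||_{op} = o(|h|); the operator-norm bound
   ||T||_op <= c is written out as ||T k|| <= c |k| for all k in R^2. *)
Definition frechet2_within (d : nat) (W : set (R * R))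
    (A B : R * R -> freq d -> R[i]) (p : R * R)
    (Css Csa Caa : freq d -> R[i]) : Prop :=
  in_l2 Css /\ in_l2 Csa /\ in_l2 Caa /\
  forall e : R, 0 < e -> exists2 delta : R, 0 < delta &
    forall h : R * R, W (shift p h) -> nrm2 h < delta ->
      forall k : R * R,
        let T := fun j =>
          k.1%:C * (A (shift p h) j - A p j) + k.2%:C * (B (shift p h) j - B p j)
          - ((h.1 * k.1)%:C * Css j + (h.1 * k.2 + h.2 * k.1)%:C * Csa j
             + (h.2 * k.2)%:C * Caa j) in
        in_l2 T /\ l2norm T <= e * nrm2 h * nrm2 k.

End Defs.

(* Main.v *)
Require Import Defs.
From HB Require Import structures.
From mathcomp Require Import all_boot all_order all_algebra.
From mathcomp Require Import all_classical all_reals all_analysis.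
From mathcomp Require Import complex.
From mathcomp Require Import ring lra.
Import Order.TTheory GRing.Theory Num.Theory.
Local Open Scope ring_scope.
Local Open Scope classical_set_scope.
From mathcomp Require Import zify.
Section MV.
Variable R : realType.

Lemma lip_bound (f df : R -> R) (lo hi M u v : R) :
  (forall x : R, lo <= x <= hi -> is_derive x 1 f (df x)) ->
  (forall x, lo <= x <= hi -> `|df x| <= M) ->
  lo <= u <= hi -> lo <= v <= hi -> `|f v - f u| <= M * `|v - u|.
Proof.
move=> hd hb.
wlog uv : u v / u <= v.
  move=> H hu hv; case/orP: (le_total u v) => uv; first exact: H.
  by rewrite distrC (distrC v); exact: H.
move=> /andP[lu uh] /andP[lv vh].
have inr x : u <= x <= v -> lo <= x <= hi.
  by case/andP=> h1 h2; rewrite (le_trans lu h1) (le_trans h2 vh).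
have hd1 : forall x, x \in `]u, v[%R -> is_derive x 1 f (df x).
  move=> x; rewrite in_itv /= => /andP[h1 h2]; apply: hd; apply: inr.
  by rewrite !ltW.
have hd2 : {in `[u, v]%R, forall x, derivable f x 1}.
  move=> x; rewrite in_itv /= => hx.
  exact: (@ex_derive _ _ _ _ _ _ _ (hd x (inr x hx))).
have [c + ->] := MVT_segment uv hd1 (derivable_within_continuous hd2).
rewrite in_itv /= => hc.
by rewrite normrM ler_wpM2r // hb // inr.
Qed.

Lemma taylor_bound (f df ddf : R -> R) (lo hi M u v : R) :
  (forall x : R, lo <= x <= hi -> is_derive x 1 f (df x)) ->
  (forall x : R, lo <= x <= hi -> is_derive x 1 df (ddf x)) ->
  (forall x, lo <= x <= hi -> `|ddf x| <= M) ->
  lo <= u <= hi -> lo <= v <= hi ->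
  `|f v - f u - df u * (v - u)| <= M * (v - u) ^+ 2.
Proof.
move=> hf hdf hb hu hv.
have M0 : 0 <= M by apply: le_trans (hb u hu); exact: normr_ge0.
pose psi x := f x - df u * x.
have inr x : Num.min u v <= x <= Num.max u v -> lo <= x <= hi.
    case/andP: hu => lu uh; case/andP: hv => lv vh; case/andP.
    case/orP: (le_total u v) => uv.
      rewrite (min_idPl uv) (max_idPr uv) => h1 h2.
      by rewrite (le_trans lu h1) (le_trans h2 vh).
    rewrite (min_idPr uv) (max_idPl uv) => h1 h2.
    by rewrite (le_trans lv h1) (le_trans h2 uh).
have hpsi : forall x : R, Num.min u v <= x <= Num.max u v ->
    is_derive x 1 psi (df x - df u).
  move=> x hx.
  have H := is_deriveB (hf x (inr x hx)) (is_deriveZ (df u) (is_derive_id x (1:R))).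
  apply: is_derive_eq H _; by rewrite /GRing.scale /=; rewrite mulr1.
have key : forall x, Num.min u v <= x <= Num.max u v ->
    `|df x - df u| <= M * `|v - u|.
  move=> x hx.
  apply: le_trans (@lip_bound df ddf lo hi M u x hdf hb hu (inr x hx)) _.
  rewrite ler_wpM2l //.
  case/andP: hx; case/orP: (le_total u v) => uv.
    rewrite (min_idPl uv) (max_idPr uv) => h1 h2.
    by rewrite !ger0_norm ?subr_ge0 // ?lerD2r // (le_trans h1 h2).
  rewrite (min_idPr uv) (max_idPl uv) => h1 h2.
  by rewrite !ler0_norm ?subr_le0 // ?lerN2 ?lerD2r // (le_trans h1 h2).
have := @lip_bound psi (fun x => df x - df u) (Num.min u v) (Num.max u v)
   (M * `|v - u|) u v hpsi key.
rewrite /psi.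
have -> : f v - df u * v - (f u - df u * u) = f v - f u - df u * (v - u) by ring.
rewrite -mulrA -expr2 real_normK; last by apply: num_real.
apply.
  by rewrite ge_min le_max lexx.
by rewrite ge_min le_max lexx !orbT.
Qed.
End MV.
Section Rem.
Set Implicit Arguments. Unset Strict Implicit.
Variable R : realType.

Lemma rem2 (G Gs Ga Gss Gaa Gsa : R -> R -> R) (s0 s1 a0 a1 Mb a a' s s' : R) :
 (forall a t, a0 <= a <= a1 -> s0 <= t <= s1 -> is_derive t 1 (G a) (Gs a t)) ->
 (forall a t, a0 <= a <= a1 -> s0 <= t <= s1 -> is_derive t 1 (Gs a) (Gss a t)) ->
 (forall a t, a0 <= a <= a1 -> s0 <= t <= s1 -> is_derive a 1 (fun a => G a t) (Ga a t)) ->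
 (forall a t, a0 <= a <= a1 -> s0 <= t <= s1 -> is_derive a 1 (fun a => Ga a t) (Gaa a t)) ->
 (forall a t, a0 <= a <= a1 -> s0 <= t <= s1 -> is_derive a 1 (fun a => Gs a t) (Gsa a t)) ->
 (forall a t, a0 <= a <= a1 -> s0 <= t <= s1 ->
    [/\ `|Gss a t| <= Mb, `|Gaa a t| <= Mb & `|Gsa a t| <= Mb]) ->
 a0 <= a <= a1 -> a0 <= a' <= a1 -> s0 <= s <= s1 -> s0 <= s' <= s1 ->
 `|G a' s' - G a s - ((s' - s) * Gs a s + (a' - a) * Ga a s)|
   <= 2 * Mb * ((s' - s) ^+ 2 + (a' - a) ^+ 2).
Proof.
move=> d1 d2 d3 d4 d5 hb ha ha' hs hs'.
have M0 : 0 <= Mb by case: (hb a s ha hs) => h _ _; apply: le_trans h.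
have T1 := @taylor_bound _ (G a') (Gs a') (Gss a') s0 s1 Mb s s'
  (fun x hx => d1 a' x ha' hx) (fun x hx => d2 a' x ha' hx)
  (fun x hx => let: And3 h _ _ := hb a' x ha' hx in h) hs hs'.
have T2 := @taylor_bound _ (fun a => G a s) (fun a => Ga a s) (fun a => Gaa a s)
  a0 a1 Mb a a'
  (fun x hx => d3 x s hx hs) (fun x hx => d4 x s hx hs)
  (fun x hx => let: And3 _ h _ := hb x s hx hs in h) ha ha'.
have T3 := @lip_bound _ (fun a => Gs a s) (fun a => Gsa a s) a0 a1 Mb a a'
  (fun x hx => d5 x s hx hs)
  (fun x hx => let: And3 _ _ h := hb x s hx hs in h) ha ha'.
simpl in T1, T2, T3.
set X1 := G a' s' - G a' s - Gs a' s * (s' - s) in T1.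
set X2 := G a' s - G a s - Ga a s * (a' - a) in T2.
set X3 := Gs a' s - Gs a s in T3.
have -> : G a' s' - G a s - ((s' - s) * Gs a s + (a' - a) * Ga a s)
   = X1 + X2 + (s' - s) * X3 by rewrite /X1 /X2 /X3; ring.
apply: le_trans (ler_normD _ _) _.
apply: le_trans (lerD (ler_normD _ _) (lexx _)) _.
rewrite normrM.
have e1 : (s' - s) ^+ 2 = `|s' - s| ^+ 2 by rewrite real_normK // num_real.
have e2 : (a' - a) ^+ 2 = `|a' - a| ^+ 2 by rewrite real_normK // num_real.
rewrite e1 e2 in T1 T2 *.
have n1 := normr_ge0 (s' - s); have n2 := normr_ge0 (a' - a).
have n3 := normr_ge0 X3.
have T3' : `|s' - s| * `|X3| <= `|s' - s| * (Mb * `|a' - a|) by rewrite ler_wpM2l.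
set u := `|s' - s| in n1 T1 T3' *; set v := `|a' - a| in n2 T2 T3' *.
have hh : 0 <= Mb * (u - v) ^+ 2 by rewrite mulr_ge0 // sqr_ge0.
nra.
Qed.
End Rem.
Section D.
Set Implicit Arguments. Unset Strict Implicit.
Variable R : realType.
Implicit Types (p q : R -> R) (x dp dq : R).

Lemma der_id x : is_derive x (1:R) (fun y : R => y) 1.
Proof. exact: is_derive_id. Qed.

Lemma der_cst (k : R) x : is_derive x (1:R) (fun _ : R => k) 0.
Proof. exact: is_derive_cst. Qed.

Lemma der_add p q x dp dq : is_derive x 1 p dp -> is_derive x 1 q dq ->
  is_derive x 1 (fun y => p y + q y) (dp + dq).
Proof. move=> hp hq; exact: (is_deriveD hp hq). Qed.

Lemma der_sub p q x dp dq : is_derive x 1 p dp -> is_derive x 1 q dq ->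
  is_derive x 1 (fun y => p y - q y) (dp - dq).
Proof. move=> hp hq; exact: (is_deriveB hp hq). Qed.

Lemma der_mul p q x dp dq : is_derive x 1 p dp -> is_derive x 1 q dq ->
  is_derive x 1 (fun y => p y * q y) (dp * q x + p x * dq).
Proof.
move=> hp hq; apply: is_derive_eq (is_deriveM hp hq) _.
by rewrite /GRing.scale /= addrC mulrC.
Qed.

Lemma der_inv q x dq : q x != 0 -> is_derive x 1 q dq ->
  is_derive x 1 (fun y => (q y)^-1) (- dq / (q x) ^+ 2).
Proof.
move=> hq0 hq; apply: is_derive_eq (is_deriveV hq0 hq) _.
by rewrite /GRing.scale /= mulrC mulNr mulrN.
Qed.

Lemma der_div p q x dp dq : q x != 0 -> is_derive x 1 p dp -> is_derive x 1 q dq ->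
  is_derive x 1 (fun y => p y / q y) ((dp * q x - p x * dq) / (q x) ^+ 2).
Proof.
move=> hq0 hp hq; have H := der_mul hp (der_inv hq0 hq).
apply: (is_derive_eq H).
by rewrite /=; field.
Qed.

Lemma der_exp (c x : R) : is_derive x 1 (fun t => expR (c * t)) (c * expR (c * x)).
Proof.
have h1 : is_derive x 1 (fun t : R => c * t) c.
  apply: is_derive_eq (der_mul (der_cst c x) (der_id x)) _; ring.
apply: is_derive_eq (is_derive1_comp (is_derive_expR (c * x)) h1) _.
by rewrite mulrC.
Qed.

Lemma der_comp (G e : R -> R) (dG de x : R) : is_derive (e x) (1:R) G dG -> is_derive x 1 e de ->
  is_derive x 1 (fun t => G (e t)) (dG * de).
Proof. move=> hG he; exact: (is_derive1_comp hG he). Qed.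

End D.
Section F.
Set Implicit Arguments. Unset Strict Implicit.
Variable R : realType.
Implicit Types (a y : R).

Lemma der_pow (p : R -> R) (x dp : R) (n : nat) : is_derive x 1 p dp ->
  is_derive x 1 (fun y => (p y) ^+ n.+1) (n.+1%:R * (p x) ^+ n * dp).
Proof.
move=> hp; elim: n => [|n IH].
  apply: (is_derive_eq hp); by rewrite mulr1 mul1r.
have -> : (fun y => p y ^+ n.+2) = (fun y => p y * p y ^+ n.+1).
  by apply: funext => y; rewrite exprS.
apply: (is_derive_eq (der_mul hp IH)).
rewrite !exprS -[in RHS](addn1 n.+1) natrD; ring.
Qed.

Definition F0 a y := a / (a + y).
Definition F1 a y := y / (a + y) ^+ 2.
Definition F2 a y := y * (a - y) / (a + y) ^+ 3.
Definition F3 a y := y * (a ^+ 2 - 4 * a * y + y ^+ 2) / (a + y) ^+ 4.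
Definition K2 a y := - 2 * y / (a + y) ^+ 3.
Definition K3 a y := 6 * y / (a + y) ^+ 4.
Definition K4 a y := y * (4 * y - 2 * a) / (a + y) ^+ 4.

Lemma dpy a y n : is_derive y 1 (fun y => (a + y) ^+ n.+1) (n.+1%:R * (a + y) ^+ n).
Proof.
apply: (is_derive_eq (der_pow n (der_add (der_cst a y) (der_id y)))).
by rewrite add0r mulr1.
Qed.

Lemma dpa a y n : is_derive a 1 (fun a => (a + y) ^+ n.+1) (n.+1%:R * (a + y) ^+ n).
Proof.
apply: (is_derive_eq (der_pow n (der_add (der_id a) (der_cst y a)))).
by rewrite addr0 mulr1.
Qed.

Lemma dF0y a y : a + y != 0 -> is_derive y 1 (F0 a) (- a / (a + y) ^+ 2).
Proof.
move=> h; have H := der_div (q := fun y => a + y) h (der_cst a y) (der_add (der_cst a y) (der_id y)).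
apply: (is_derive_eq H); rewrite /=; by field; rewrite ?h //.
Qed.

Lemma dF1y a y : a + y != 0 -> is_derive y 1 (F1 a) ((a - y) / (a + y) ^+ 3).
Proof.
move=> h; have h2 : (a + y) ^+ 2 != 0 by rewrite expf_neq0.
have H := der_div (q := fun y => (a + y) ^+ 2) h2 (der_id y) (dpy a y 1).
apply: (is_derive_eq H); rewrite /=; by field; rewrite ?h //.
Qed.

Lemma dF2y a y : a + y != 0 ->
  is_derive y 1 (F2 a) ((a ^+ 2 - 4 * a * y + y ^+ 2) / (a + y) ^+ 4).
Proof.
move=> h; have h2 : (a + y) ^+ 3 != 0 by rewrite expf_neq0.
have H := der_div (q := fun y => (a + y) ^+ 3) h2 (der_mul (der_id y) (der_sub (der_cst a y) (der_id y))) (dpy a y 2).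
apply: (is_derive_eq H); rewrite /=; by field; rewrite ?h //.
Qed.

Lemma dF0a a y : a + y != 0 -> is_derive a 1 (fun a => F0 a y) (F1 a y).
Proof.
move=> h; have H := der_div (q := fun a => a + y) h (der_id a) (der_add (der_id a) (der_cst y a)).
apply: (is_derive_eq H); rewrite /F1 /=; by field; rewrite ?h //.
Qed.

Lemma dF1a a y : a + y != 0 -> is_derive a 1 (fun a => F1 a y) (K2 a y).
Proof.
move=> h; have h2 : (a + y) ^+ 2 != 0 by rewrite expf_neq0.
have H := der_div (q := fun a => (a + y) ^+ 2) h2 (der_cst y a) (dpa a y 1).
apply: (is_derive_eq H); rewrite /K2 /=; by field; rewrite ?h //.
Qed.

Lemma dK2a a y : a + y != 0 -> is_derive a 1 (fun a => K2 a y) (K3 a y).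
Proof.
move=> h; have h2 : (a + y) ^+ 3 != 0 by rewrite expf_neq0.
have H := der_div (q := fun a => (a + y) ^+ 3) h2 (der_cst (- 2 * y) a) (dpa a y 2).
apply: (is_derive_eq H); rewrite /K3 /=; by field; rewrite ?h //.
Qed.

Lemma dF2a a y : a + y != 0 -> is_derive a 1 (fun a => F2 a y) (K4 a y).
Proof.
move=> h; have h2 : (a + y) ^+ 3 != 0 by rewrite expf_neq0.
have H := der_div (q := fun a => (a + y) ^+ 3) h2 (der_mul (der_cst y a) (der_sub (der_id a) (der_cst y a))) (dpa a y 2).
apply: (is_derive_eq H); rewrite /K4 /=; by field; rewrite ?h //.
Qed.

Lemma daF1a a y : a + y != 0 -> is_derive a 1 (fun a => a * F1 a y) (- F2 a y).
Proof.
move=> h; have H := der_mul (der_id a) (dF1a h).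
apply: (is_derive_eq H); rewrite /F1 /F2 /K2 /=; by field; rewrite ?h //.
Qed.

Lemma daF2a a y : a + y != 0 ->
  is_derive a 1 (fun a => a * F2 a y) (F2 a y + a * K4 a y).
Proof.
move=> h; have H := der_mul (der_id a) (dF2a h).
apply: (is_derive_eq H); rewrite /=; ring.
Qed.

End F.
Section K.
Variable R : realType.
Lemma int_sq_ge1 (z : int) : z != 0 -> 1 <= (z%:~R : R) ^+ 2.
Proof.
move=> hz.
have h : (1 <= z * z)%R by lia.
by rewrite expr2 -intrM ler1z.
Qed.

Lemma knorm_ge1 d (k : freq d) : k != 0 -> 1 <= @knorm R d k.
Proof.
move=> hk.
have [i hi] : exists i, k ord0 i != 0.
  suff: ~~ [forall i, k ord0 i == 0].
    by rewrite negb_forall => /existsP[i hi]; exists i.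
  apply: contra hk => /forallP H; apply/eqP/matrixP => i j.
  by rewrite (ord1 i) mxE; apply/eqP/H.
rewrite /knorm; apply: le_trans (_ : Num.sqrt 1 <= _); first by rewrite sqrtr1.
rewrite ler_sqrt; last by apply: sumr_ge0 => j _; apply: sqr_ge0.
rewrite (bigD1 i) //=; apply: le_trans (@int_sq_ge1 _ hi) _.
by rewrite lerDl sumr_ge0 // => j _; apply: sqr_ge0.
Qed.
End K.
Section C.
Set Implicit Arguments. Unset Strict Implicit.
Variable R : realType.
Variables (c s0 s1 a0 a1 : R).
Hypotheses (c0 : 0 <= c) (s00 : 0 < s0) (a00 : 0 < a0) (a01 : a0 <= a1).

Definition Ex (t : R) := expR (c * t).
Definition Kc := 1 + 6 / s0 ^+ 3.
Definition Kb := (1 + a1) * Kc.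
Definition Mb := (6 + 4 * a1) * Kb.

Lemma Ex_ge1 t : s0 <= t -> 1 <= Ex t.
Proof.
move=> ht; apply: le_trans (expR_ge1Dx _); rewrite lerDl mulr_ge0 //.
by apply: le_trans ht; apply: ltW.
Qed.

Lemma Ex_gt0 t : 0 < Ex t.
Proof. exact: expR_gt0. Qed.

Lemma c3_bound t : s0 <= t -> 1 + c ^+ 3 <= Kc * Ex t.
Proof.
move=> ht.
have h1 := @expR_ge1Dxn R (c * s0) 2 (mulr_ge0 c0 (ltW s00)).
have h2 : expR (c * s0) <= Ex t by rewrite /Ex ler_expR ler_wpM2l.
have h3 : (3`!)%:R = 6 :> R by [].
rewrite h3 in h1.
have E1 := Ex_ge1 ht.
have hs3 : 0 < s0 ^+ 3 by rewrite exprn_gt0.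
have h4 : (c * s0) ^+ 3 <= 6 * Ex t.
  have h5 := le_trans h1 h2.
  have h6 : 0 <= (c * s0) ^+ 3 by rewrite exprn_ge0 // mulr_ge0 // ltW.
  lra.
have h7 : c ^+ 3 = (c * s0) ^+ 3 / s0 ^+ 3.
  by rewrite exprMn mulrK // unitfE gt_eqF.
have h8 : c ^+ 3 <= 6 / s0 ^+ 3 * Ex t.
  rewrite h7 ler_pdivrMr //.
  have -> : 6 / s0 ^+ 3 * Ex t * s0 ^+ 3 = 6 * Ex t by field; rewrite gt_eqF.
  exact: h4.
rewrite /Kc mulrDl mul1r; lra.
Qed.

Lemma Kc_ge1 : 1 <= Kc.
Proof. by rewrite /Kc lerDl divr_ge0 // exprn_ge0 // ltW. Qed.

Lemma cj_bound t j : s0 <= t -> (j <= 3)%N -> c ^+ j <= Kc * Ex t.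
Proof.
move=> ht hj; apply: le_trans (c3_bound ht).
case: (lerP c 1) => hc.
  by apply: le_trans (exprn_ile1 _ c0 hc) _; rewrite lerDl exprn_ge0.
apply: le_trans (ler_weXn2l (ltW hc) hj) _.
by rewrite lerDr.
Qed.

Lemma cjb t j a : s0 <= t -> (j <= 3)%N -> a0 <= a <= a1 ->
  c ^+ j <= Kb * Ex t /\ a * c ^+ j <= Kb * Ex t.
Proof.
move=> ht hj /andP[ha0 ha1].
have h := cj_bound ht hj.
have K1 := Kc_ge1; have E1 := Ex_ge1 ht.
have cj0 : 0 <= c ^+ j by rewrite exprn_ge0.
have a0' : 0 <= a by apply: le_trans ha0; apply: ltW.
have hk : 0 <= Kc * Ex t by rewrite mulr_ge0 //; lra.
split.
  apply: le_trans h _; rewrite /Kb -mulrA ler_peMl //; lra.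
apply: le_trans (ler_wpM2l a0' h) _.
rewrite /Kb -mulrA ler_wpM2r //; lra.
Qed.

Lemma bnd (a y P m cj : R) n : a0 <= a -> 1 <= y -> 0 <= cj -> cj <= Kb * y ->
  `|P| <= m * (a + y) ^+ n -> m <= 6 + 4 * a1 ->
  `|cj * (y * P / (a + y) ^+ n.+2)| <= Mb.
Proof.
move=> ha hy hcj hcjb hP hm.
have hD : 0 < a + y by apply: ltr_wpDl; [apply: le_trans ha; apply: ltW | lra].
have hDn : 0 < (a + y) ^+ n by rewrite exprn_gt0.
have m0 : 0 <= m.
  by rewrite -(@pmulr_lge0 _ ((a + y) ^+ n)) //; apply: le_trans hP.
have y0 : 0 < y by lra.
rewrite normrM (ger0_norm hcj) normf_div normrM (ger0_norm (ltW y0)).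
rewrite (ger0_norm (ltW (exprn_gt0 _ hD))).
have h1 : y * `|P| / (a + y) ^+ n.+2 <= m / y.
  rewrite ler_pdivrMr ?exprn_gt0 // mulrAC ler_pdivlMr //.
  have e : m * (a + y) ^+ n.+2 = m * (a + y) ^+ n * (a + y) ^+ 2.
    by rewrite -mulrA -exprD addn2.
  rewrite e.
  have aa : 0 <= a by apply: le_trans ha; apply: ltW.
  have hya : y <= a + y by rewrite -subr_ge0 addrK.
  have hy2 : y * y <= (a + y) ^+ 2.
    by rewrite expr2; apply: ler_pM => //; apply: ltW.
  have -> : y * `|P| * y = `|P| * (y * y) by ring.
  apply: le_trans (_ : `|P| * (a + y) ^+ 2 <= _).
    by apply: ler_wpM2l.
  by apply: ler_wpM2r => //; rewrite exprn_ge0 // ltW.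
apply: le_trans (ler_wpM2l hcj h1) _.
have h2 : cj * (m / y) <= m * Kb.
  rewrite mulrA ler_pdivrMr // [cj * m]mulrC -mulrA.
  exact: ler_wpM2l.
apply: le_trans h2 _.
rewrite /Mb ler_wpM2r //.
rewrite /Kb mulr_ge0 //; last by apply: le_trans Kc_ge1.
by apply: addr_ge0 => //; apply: le_trans (ltW a00) a01.
Qed.

Lemma nz a t : a0 <= a -> a + Ex t != 0.
Proof.
move=> ha; rewrite gt_eqF // addr_gt0 ?Ex_gt0 //.
exact: lt_le_trans a00 ha.
Qed.

Lemma dEx (t : R) : is_derive t (1:R) Ex (c * Ex t).
Proof. exact: der_exp. Qed.

Lemma cjb' t j a : s0 <= t -> (j <= 3)%N -> a0 <= a <= a1 ->
  0 <= c ^+ j /\ 0 <= a * c ^+ j.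
Proof.
move=> _ _ /andP[ha _]; have a0' : 0 <= a by apply: le_trans ha; apply: ltW.
by rewrite exprn_ge0 // mulr_ge0 // exprn_ge0.
Qed.

Ltac side := first [done | apply: ltW; exact: lt_le_trans a00 _ | idtac].

Lemma Mb_ge1 : 1 <= Mb.
Proof.
have K1 := Kc_ge1; have a1p : 0 <= a1 by apply: le_trans (ltW a00) a01.
rewrite /Mb /Kb.
have h1 : 1 <= 6 + 4 * a1 by lra.
have h2 : 1 <= 1 + a1 by lra.
have h3 : 1 <= (1 + a1) * Kc by nra.
nra.
Qed.

Section B.
Variables (a t : R).
Hypotheses (ha : a0 <= a <= a1) (ht : s0 <= t <= s1).
Let y := Ex t.
Let hy : 1 <= y. Proof. by case/andP: ht => h _; exact: Ex_ge1. Qed.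
Let ha0 : a0 <= a. Proof. by case/andP: ha. Qed.
Let hs0 : s0 <= t. Proof. by case/andP: ht. Qed.
Let ha1 : a <= a1. Proof. by case/andP: ha. Qed.
Let apos : 0 < a. Proof. exact: lt_le_trans a00 ha0. Qed.
Let a1p : 0 <= a1. Proof. exact: le_trans (ltW a00) a01. Qed.
Let hD : 0 < a + y. Proof. by rewrite addr_gt0 // Ex_gt0. Qed.

Lemma cK j : (j <= 3)%N -> c ^+ j <= Kb * y.
Proof. by move=> hj; case: (cjb hs0 hj ha). Qed.
Lemma caK j : (j <= 3)%N -> a * c ^+ j <= Kb * y.
Proof. by move=> hj; case: (cjb hs0 hj ha). Qed.
Lemma c0K j : 0 <= c ^+ j. Proof. by rewrite exprn_ge0. Qed.
Lemma ca0K j : 0 <= a * c ^+ j. Proof. by rewrite mulr_ge0 // ?exprn_ge0 // ltW. Qed.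

Lemma bF2 cj : 0 <= cj -> cj <= Kb * y -> `|cj * F2 a y| <= Mb.
Proof.
move: (apos) (hy) (hD) (ha1) (a1p) (ha0) => Hapos Hy HD Ha1 Ha1p Ha0.
move=> h1 h2; apply: (@bnd a y (a - y) 1 cj 1) => //.
  rewrite expr1 mul1r; rewrite ler_norml; apply/andP; split; lra.
lra.
Qed.

Lemma bF3 cj : 0 <= cj -> cj <= Kb * y -> `|cj * F3 a y| <= Mb.
Proof.
move: (apos) (hy) (hD) (ha1) (a1p) (ha0) => Hapos Hy HD Ha1 Ha1p Ha0.
move=> h1 h2; apply: (@bnd a y _ 2 cj 2) => //.
  rewrite ler_norml; apply/andP; split.
    have : 0 <= a * y by apply: mulr_ge0; lra.
    rewrite expr2; nra.
  have : 0 <= a * y by apply: mulr_ge0; lra.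
  rewrite !expr2; nra.
lra.
Qed.

Lemma bF1 cj : 0 <= cj -> cj <= Kb * y -> `|cj * F1 a y| <= Mb.
Proof.
move: (apos) (hy) (hD) (ha1) (a1p) (ha0) => Hapos Hy HD Ha1 Ha1p Ha0.
move=> h1 h2; have -> : F1 a y = y * 1 / (a + y) ^+ 0.+2 by rewrite /F1 mulr1.
apply: (@bnd a y 1 1 cj 0) => //; first by rewrite normr1 expr0 mulr1.
lra.
Qed.

Lemma bK2 : `|K2 a y| <= Mb.
Proof.
move: (apos) (hy) (hD) (ha1) (a1p) (ha0) => Hapos Hy HD Ha1 Ha1p Ha0.
have -> : K2 a y = 1 * (y * (-2) / (a + y) ^+ 1.+2) by rewrite /K2; ring.
apply: (@bnd a y (-2) 2 1 1) => //.
- by have := cK (j:=0) isT; rewrite expr0.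
- rewrite normrN expr1 ler_norml; apply/andP; split; lra.
- lra.
Qed.

Lemma bK3 : `|K3 a y| <= Mb.
Proof.
move: (apos) (hy) (hD) (ha1) (a1p) (ha0) => Hapos Hy HD Ha1 Ha1p Ha0.
have -> : K3 a y = 1 * (y * 6 / (a + y) ^+ 2.+2) by rewrite /K3; ring.
apply: (@bnd a y 6 6 1 2) => //.
- by have := cK (j:=0) isT; rewrite expr0.
- have h : 1 <= (a + y) ^+ 2.
    by rewrite expr2 -[1]mulr1; apply: ler_pM => //; lra.
  rewrite ger0_norm; [nra | lra].
- lra.
Qed.

Lemma bK4 cj : 0 <= cj -> cj <= Kb * y -> `|cj * K4 a y| <= Mb.
Proof.
move: (apos) (hy) (hD) (ha1) (a1p) (ha0) => Hapos Hy HD Ha1 Ha1p Ha0.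
move=> h1 h2; apply: (@bnd a y _ 4 cj 2) => //.
  have h : a + y <= (a + y) ^+ 2.
    by rewrite expr2 -{1}[a + y]mulr1; apply: ler_pM => //; lra.
  rewrite ler_norml; apply/andP; split; nra.
lra.
Qed.

Lemma bF2K4 cj : 0 <= cj -> cj <= Kb * y -> `|cj * (F2 a y + a * K4 a y)| <= Mb.
Proof.
move: (apos) (hy) (hD) (ha1) (a1p) (ha0) => Hapos Hy HD Ha1 Ha1p Ha0.
move=> h1 h2.
have -> : F2 a y + a * K4 a y =
  y * ((a - y) * (a + y) + a * (4 * y - 2 * a)) / (a + y) ^+ 2.+2.
  by rewrite /F2 /K4; field; rewrite gt_eqF.
apply: (@bnd a y _ (1 + 4 * a1) cj 2) => //.
  have hD1 : 1 <= a + y by lra.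
  have e1 : (a - y) * (a + y) <= (a + y) ^+ 2 by rewrite expr2 ler_wpM2r; lra.
  have e2 : - (a + y) ^+ 2 <= (a - y) * (a + y) by rewrite expr2 -mulNr ler_wpM2r; lra.
  have e3 : a * (4 * y - 2 * a) <= 4 * (a * (a + y)) by nra.
  have e4 : - (4 * (a * (a + y))) <= a * (4 * y - 2 * a) by nra.
  have e5 : a * (a + y) <= a1 * (a + y) ^+ 2.
    by rewrite expr2 mulrA ler_wpM2r; [|lra|nra].
  rewrite ler_norml; apply/andP; split; lra.
lra.
Qed.

Lemma bF0 : `|F0 a y| <= Mb.
Proof.
move: (apos) (hy) (hD) (ha1) (a1p) (ha0) => Hapos Hy HD Ha1 Ha1p Ha0.
apply: le_trans Mb_ge1; rewrite /F0 normf_div !ger0_norm ?ler_pdivrMr //; try lra.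
Qed.

End B.

Definition inW a t := (a0 <= a <= a1) /\ (s0 <= t <= s1).

Lemma remF a a' s s' : a0 <= a <= a1 -> a0 <= a' <= a1 -> s0 <= s <= s1 -> s0 <= s' <= s1 ->
  `|F0 a' (Ex s') - F0 a (Ex s) -
    ((s' - s) * (- c * (a * F1 a (Ex s))) + (a' - a) * F1 a (Ex s))|
  <= 2 * Mb * ((s' - s) ^+ 2 + (a' - a) ^+ 2).
Proof.
apply: (@rem2 R (fun a t => F0 a (Ex t)) (fun a t => - c * (a * F1 a (Ex t)))
  (fun a t => F1 a (Ex t)) (fun a t => - ((a * c ^+ 2) * F2 a (Ex t)))
  (fun a t => K2 a (Ex t)) (fun a t => c * F2 a (Ex t))).
- move=> b t hb ht; have h := nz t (proj1 (andP hb)).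
  apply: (is_derive_eq (der_comp (dF0y h) (dEx t))).
  by rewrite /F1; field.
- move=> b t hb ht; have h := nz t (proj1 (andP hb)).
  apply: (is_derive_eq (der_mul (der_cst (- c) t)
     (der_mul (der_cst b t) (der_comp (dF1y h) (dEx t))))).
  by rewrite /F2; field.
- move=> b t hb ht; exact: (dF0a (nz t (proj1 (andP hb)))).
- move=> b t hb ht; exact: (dF1a (nz t (proj1 (andP hb)))).
- move=> b t hb ht; have h := nz t (proj1 (andP hb)).
  apply: (is_derive_eq (der_mul (der_cst (- c) b) (daF1a h))).
  by ring.
- move=> b t hb ht; split.
  + rewrite /= normrN; exact: (bF2 hb ht (ca0K hb 2) (caK hb ht (j:=2) isT)).
  + exact: bK2 hb ht.
  + have := bF2 hb ht (c0K 1) (cK hb ht (j:=1) isT); by rewrite expr1.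
Qed.

Lemma remA a a' s s' : a0 <= a <= a1 -> a0 <= a' <= a1 -> s0 <= s <= s1 -> s0 <= s' <= s1 ->
  `|- c * (a' * F1 a' (Ex s')) - - c * (a * F1 a (Ex s)) -
    ((s' - s) * ((- c ^+ 2) * (a * F2 a (Ex s))) + (a' - a) * (c * F2 a (Ex s)))|
  <= 2 * Mb * ((s' - s) ^+ 2 + (a' - a) ^+ 2).
Proof.
apply: (@rem2 R (fun a t => - c * (a * F1 a (Ex t)))
  (fun a t => (- c ^+ 2) * (a * F2 a (Ex t)))
  (fun a t => c * F2 a (Ex t)) (fun a t => - ((a * c ^+ 3) * F3 a (Ex t)))
  (fun a t => c * K4 a (Ex t))
  (fun a t => - (c ^+ 2 * (F2 a (Ex t) + a * K4 a (Ex t))))).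
- move=> b t hb ht; have h := nz t (proj1 (andP hb)).
  apply: (is_derive_eq (der_mul (der_cst (- c) t)
     (der_mul (der_cst b t) (der_comp (dF1y h) (dEx t))))).
  by rewrite /F2; field.
- move=> b t hb ht; have h := nz t (proj1 (andP hb)).
  apply: (is_derive_eq (der_mul (der_cst (- c ^+ 2) t)
     (der_mul (der_cst b t) (der_comp (dF2y h) (dEx t))))).
  by rewrite /F3; field.
- move=> b t hb ht; have h := nz t (proj1 (andP hb)).
  apply: (is_derive_eq (der_mul (der_cst (- c) b) (daF1a h))).
  by ring.
- move=> b t hb ht; have h := nz t (proj1 (andP hb)).
  apply: (is_derive_eq (der_mul (der_cst c b) (dF2a h))).
  by ring.
- move=> b t hb ht; have h := nz t (proj1 (andP hb)).
  apply: (is_derive_eq (der_mul (der_cst (- c ^+ 2) b) (daF2a h))).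
  by ring.
- move=> b t hb ht; split.
  + rewrite /= normrN; exact: (bF3 hb ht (ca0K hb 3) (caK hb ht (j:=3) isT)).
  + have := bK4 hb ht (c0K 1) (cK hb ht (j:=1) isT); by rewrite expr1.
  + rewrite /= normrN; exact: (bF2K4 hb ht (c0K 2) (cK hb ht (j:=2) isT)).
Qed.

Lemma remB a a' s s' : a0 <= a <= a1 -> a0 <= a' <= a1 -> s0 <= s <= s1 -> s0 <= s' <= s1 ->
  `|F1 a' (Ex s') - F1 a (Ex s) -
    ((s' - s) * (c * F2 a (Ex s)) + (a' - a) * K2 a (Ex s))|
  <= 2 * Mb * ((s' - s) ^+ 2 + (a' - a) ^+ 2).
Proof.
apply: (@rem2 R (fun a t => F1 a (Ex t)) (fun a t => c * F2 a (Ex t))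
  (fun a t => K2 a (Ex t)) (fun a t => c ^+ 2 * F3 a (Ex t))
  (fun a t => K3 a (Ex t)) (fun a t => c * K4 a (Ex t))).
- move=> b t hb ht; have h := nz t (proj1 (andP hb)).
  apply: (is_derive_eq (der_comp (dF1y h) (dEx t))).
  by rewrite /F2; field.
- move=> b t hb ht; have h := nz t (proj1 (andP hb)).
  apply: (is_derive_eq (der_mul (der_cst c t) (der_comp (dF2y h) (dEx t)))).
  by rewrite /F3; field.
- move=> b t hb ht; exact: (dF1a (nz t (proj1 (andP hb)))).
- move=> b t hb ht; exact: (dK2a (nz t (proj1 (andP hb)))).
- move=> b t hb ht; have h := nz t (proj1 (andP hb)).
  apply: (is_derive_eq (der_mul (der_cst c b) (dF2a h))).
  by ring.
- move=> b t hb ht; split.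
  + exact: (bF3 hb ht (c0K 2) (cK hb ht (j:=2) isT)).
  + exact: bK3 hb ht.
  + have := bK4 hb ht (c0K 1) (cK hb ht (j:=1) isT); by rewrite expr1.
Qed.

Lemma ptb a t : a0 <= a <= a1 -> s0 <= t <= s1 ->
  `|F0 a (Ex t)| <= Mb /\ `|- c * (a * F1 a (Ex t))| <= Mb /\ `|F1 a (Ex t)| <= Mb /\
      `|(- c ^+ 2) * (a * F2 a (Ex t))| <= Mb /\ `|c * F2 a (Ex t)| <= Mb /\
      `|K2 a (Ex t)| <= Mb.
Proof.
move=> ha ht; split; first exact: bF0 ha ht.
split.
  have -> : - c * (a * F1 a (Ex t)) = - ((a * c ^+ 1) * F1 a (Ex t)) by ring.
  by rewrite normrN; exact: (bF1 ha ht (ca0K ha 1) (caK ha ht (j:=1) isT)).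
split.
  have := bF1 ha ht (c0K 0) (cK ha ht (j:=0) isT); by rewrite expr0 mul1r.
split.
  have -> : (- c ^+ 2) * (a * F2 a (Ex t)) = - ((a * c ^+ 2) * F2 a (Ex t)) by ring.
  by rewrite normrN; exact: (bF2 ha ht (ca0K ha 2) (caK ha ht (j:=2) isT)).
split.
  have := bF2 ha ht (c0K 1) (cK ha ht (j:=1) isT); by rewrite expr1.
exact: bK2 ha ht.
Qed.

End C.
Section L2.
Variable R : realType.
Local Open Scope complex_scope.

Lemma cmod2_ge0 (z : R[i]) : 0 <= cmod2 z.
Proof. by rewrite /cmod2 addr_ge0 // sqr_ge0. Qed.

Lemma cmod2_scale (r : R) (z : R[i]) : cmod2 (r%:C * z) = r ^+ 2 * cmod2 z.
Proof. by case: z => x y; rewrite /cmod2 /=; ring. Qed.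

Lemma esum_scale (T : choiceType) (a : T -> R) (c : R) : 0 <= c ->
  (forall k, 0 <= a k) ->
  (\esum_(k in [set: T]) (c * a k)%:E <= c%:E * \esum_(k in [set: T]) (a k)%:E)%E.
Proof.
move=> c0 a0; apply: ge_ereal_sup => _ [A [finA _] <-] /=.
rewrite (eq_fsbigr (fun k => c%:E * (a k)%:E)%E); last by move=> k _; rewrite EFinM.
rewrite -ge0_mule_fsumr; last by move=> k; rewrite lee_fin.
apply: lee_wpmul2l; first by rewrite lee_fin.
by apply: ereal_sup_ubound; exists A.
Qed.

Lemma l2_bound d (u g : freq d -> R[i]) (c : R) : 0 <= c -> in_l2 g ->
  (forall k, cmod2 (u k) <= c * cmod2 (g k)) ->
  in_l2 u /\ l2norm u <= Num.sqrt c * l2norm g.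
Proof.
move=> c0 hg hb.
have le1 : (l2norm2 u <= c%:E * l2norm2 g)%E.
  have := @esum_scale (freq d) _ _ c0 (fun k => cmod2_ge0 (g k)).
  apply: le_trans; rewrite /l2norm2.
  by apply: le_esum => k _; rewrite lee_fin.
have g0 : (0 <= l2norm2 g)%E by apply: esum_ge0 => k _; rewrite lee_fin cmod2_ge0.
have u0 : (0 <= l2norm2 u)%E by apply: esum_ge0 => k _; rewrite lee_fin cmod2_ge0.
have gfin : l2norm2 g \is a fin_num by rewrite ge0_fin_numE.
have hu : in_l2 u.
  rewrite /in_l2; apply: le_lt_trans le1 _.
  by rewrite -(fineK gfin) -EFinM ltry.
split => //.
have ufin : l2norm2 u \is a fin_num by rewrite ge0_fin_numE.
rewrite /l2norm -sqrtrM //.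
rewrite ler_sqrt; last by rewrite mulr_ge0 // fine_ge0.
by rewrite -lee_fin EFinM !fineK.
Qed.

End L2.
Section Main.
Set Implicit Arguments. Unset Strict Implicit.
Variables (R : realType) (d : nat) (s0 s1 a0 a1 : R) (g : freq d -> R[i]).
Hypotheses (hs0 : 0 < s0) (hs01 : s0 < s1) (ha0 : 0 < a0) (ha01 : a0 < a1)
  (hg : in_l2 g) (g0 : g 0 = 0).
Local Open Scope complex_scope.

Definition cKk (k : freq d) : R := 2 * ln (@knorm R d k).

Lemma kpos k : k != 0 -> 0 < @knorm R d k.
Proof. by move=> hk; apply: lt_le_trans (@knorm_ge1 R d k hk). Qed.

Lemma cK_ge0 k : k != 0 -> 0 <= cKk k.
Proof. by move=> hk; rewrite /cKk mulr_ge0 // ln_ge0 // (@knorm_ge1 R d k hk). Qed.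

Lemma powE k s : k != 0 -> @knorm R d k `^ (2 * s) = Ex (cKk k) s.
Proof.
move=> hk; rewrite /powR (negbTE (lt0r_neq0 (kpos hk))) /Ex /cKk.
by congr expR; ring.
Qed.

Lemma nzE k (p : R * R) : 0 < p.2 -> Ex (cKk k) p.1 + p.2 != 0.
Proof. by move=> h; rewrite gt_eqF // addr_gt0 // expR_gt0. Qed.

Lemma repS (p : R * R) k : Ssol g p k = (F0 p.2 (Ex (cKk k) p.1))%:C * g k.
Proof.
case: (eqVneq k 0) => [->|hk]; first by rewrite /Ssol g0 !mulr0.
by rewrite /Ssol powE.
Qed.

Lemma repS' s a k : Ssol g (s, a) k = (F0 a (Ex (cKk k) s))%:C * g k.
Proof. exact: (repS (s, a)). Qed.

Lemma cplx1 (x1 x2 x3 x4 h1 h2 : R) (z : R[i]) :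
  x1%:C * z - x2%:C * z - (h1%:C * (x3%:C * z) + h2%:C * (x4%:C * z)) =
  (x1 - x2 - (h1 * x3 + h2 * x4))%:C * z.
Proof. rewrite !(rmorphB, rmorphD, rmorphM) /=; ring. Qed.

Lemma cplx2 (q1 q2 h1 h2 A1 A0 B1 B0 Css Csa Caa : R) (z : R[i]) :
  q1%:C * (A1%:C * z - A0%:C * z) + q2%:C * (B1%:C * z - B0%:C * z) -
  ((h1 * q1)%:C * (Css%:C * z) + (h1 * q2 + h2 * q1)%:C * (Csa%:C * z) +
   (h2 * q2)%:C * (Caa%:C * z)) =
  (q1 * (A1 - A0 - (h1 * Css + h2 * Csa)) + q2 * (B1 - B0 - (h1 * Csa + h2 * Caa)))%:C * z.
Proof. rewrite !(rmorphB, rmorphD, rmorphM) /=; ring. Qed.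

Lemma rep_s (p : R * R) k : 0 < p.2 ->
  dS_s g p k = (- cKk k * (p.2 * F1 p.2 (Ex (cKk k) p.1)))%:C * g k.
Proof.
move=> hp; case: (eqVneq k 0) => [->|hk]; first by rewrite /dS_s eqxx g0 mulr0.
rewrite /dS_s (negbTE hk) /= powE //; congr (_%:C * _).
have h1 := nzE k hp; have h2 : p.2 + Ex (cKk k) p.1 != 0 by rewrite addrC.
by rewrite /F1 /cKk; field.
Qed.

Lemma rep_a (p : R * R) k : 0 < p.2 ->
  dS_a g p k = (F1 p.2 (Ex (cKk k) p.1))%:C * g k.
Proof.
move=> hp; case: (eqVneq k 0) => [->|hk]; first by rewrite /dS_a eqxx g0 mulr0.
rewrite /dS_a (negbTE hk) /= powE //; congr (_%:C * _).
have h1 := nzE k hp; have h2 : p.2 + Ex (cKk k) p.1 != 0 by rewrite addrC.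
by rewrite /F1; field.
Qed.

Lemma rep_ss (p : R * R) k : 0 < p.2 ->
  dS_ss g p k = ((- cKk k ^+ 2) * (p.2 * F2 p.2 (Ex (cKk k) p.1)))%:C * g k.
Proof.
move=> hp; case: (eqVneq k 0) => [->|hk]; first by rewrite /dS_ss eqxx g0 mulr0.
rewrite /dS_ss (negbTE hk) /= powE //; congr (_%:C * _).
have h1 := nzE k hp; have h2 : p.2 + Ex (cKk k) p.1 != 0 by rewrite addrC.
by rewrite /F2 /cKk; field.
Qed.

Lemma rep_as (p : R * R) k : 0 < p.2 ->
  dS_as g p k = (cKk k * F2 p.2 (Ex (cKk k) p.1))%:C * g k.
Proof.
move=> hp; case: (eqVneq k 0) => [->|hk]; first by rewrite /dS_as eqxx g0 mulr0.
rewrite /dS_as (negbTE hk) /= powE //; congr (_%:C * _).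
have h1 := nzE k hp; have h2 : p.2 + Ex (cKk k) p.1 != 0 by rewrite addrC.
by rewrite /F2 /cKk; field.
Qed.

Lemma rep_aa (p : R * R) k : 0 < p.2 ->
  dS_aa g p k = (K2 p.2 (Ex (cKk k) p.1))%:C * g k.
Proof.
move=> hp; case: (eqVneq k 0) => [->|hk]; first by rewrite /dS_aa eqxx g0 mulr0.
rewrite /dS_aa (negbTE hk) /= powE //; congr (_%:C * _).
have h1 := nzE k hp; have h2 : p.2 + Ex (cKk k) p.1 != 0 by rewrite addrC.
by rewrite /K2; field.
Qed.

Lemma coef_bnd (u : freq d -> R[i]) (r : freq d -> R) (B : R) : 0 <= B ->
  (forall k, u k = (r k)%:C * g k) -> (forall k, k != 0 -> `|r k| <= B) ->
  in_l2 u /\ l2norm u <= B * l2norm g.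
Proof.
move=> B0 hu hr.
have := @l2_bound R d u g (B ^+ 2) (sqr_ge0 _) hg.
rewrite sqrtr_sqr ger0_norm //; apply => k.
rewrite hu cmod2_scale.
case: (eqVneq k 0) => [->|hk].
  have c00 : cmod2 (0 : R[i]) = 0 by rewrite /cmod2 /=; rewrite expr0n /= add0r.
  by rewrite g0 c00 !mulr0.
apply: ler_wpM2r; first exact: cmod2_ge0.
have := hr k hk; have := normr_ge0 (r k); rewrite -real_normK ?num_real //.
move=> h1 h2; nra.
Qed.

Notation M := (Mb s0 a1).
Let M1 : 1 <= M. Proof. exact: Mb_ge1 hs0 ha0 (ltW ha01). Qed.
Let M0 : 0 <= M. Proof. exact: le_trans ler01 M1. Qed.
Let G0 : 0 <= l2norm g. Proof. exact: sqrtr_ge0. Qed.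

Lemma fin_ineq (C G N e K : R) : 0 <= C -> 0 <= G -> 0 <= N -> 0 < e -> 0 <= K ->
  N < e / (C * G + 1) -> C * N ^+ 2 * K * G <= e * N * K.
Proof.
move=> C0 G0' N0 e0 K0 hN.
have CG : 0 < C * G + 1 by rewrite ltr_pwDr ?mulr_ge0.
have h1 : N * (C * G + 1) < e by rewrite -ltr_pdivlMr.
have h2 : N * C * G <= e by nra.
have -> : C * N ^+ 2 * K * G = (N * C * G) * N * K by rewrite expr2; ring.
by rewrite ler_wpM2r // ler_wpM2r.
Qed.

Lemma nrm2_sq (h : R * R) : nrm2 h ^+ 2 = h.1 ^+ 2 + h.2 ^+ 2.
Proof. by rewrite /nrm2 sqr_sqrtr // addr_ge0 // sqr_ge0. Qed.

Lemma nrm2_ge0 (h : R * R) : 0 <= nrm2 h.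
Proof. exact: sqrtr_ge0. Qed.

Lemma nrm2_1 (h : R * R) : `|h.1| <= nrm2 h.
Proof.
rewrite /nrm2 -sqrtr_sqr ler_sqrt ?lerDl ?sqr_ge0 //.
by rewrite addr_ge0 // sqr_ge0.
Qed.

Lemma nrm2_2 (h : R * R) : `|h.2| <= nrm2 h.
Proof.
rewrite /nrm2 -sqrtr_sqr ler_sqrt ?lerDr ?sqr_ge0 //.
by rewrite addr_ge0 // sqr_ge0.
Qed.

Definition inWp (p : R * R) := s0 <= p.1 <= s1 /\ a0 <= p.2 <= a1.

Lemma p2pos (p : R * R) : inWp p -> 0 < p.2.
Proof. by case=> _ /andP[h _]; exact: lt_le_trans ha0 h. Qed.

Lemma part1 p : inWp p -> in_l2 (Ssol g p).
Proof.
move=> hp; case: (hp) => hs ha.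
have hb : forall k, k != 0 -> `|(fun k => F0 p.2 (Ex (cKk k) p.1)) k| <= M.
  move=> k hk; exact: (ptb (cK_ge0 hk) hs0 ha0 (ltW ha01) ha hs).1.
by case: (@coef_bnd (Ssol g p) (fun k => F0 p.2 (Ex (cKk k) p.1)) M M0 (repS p) hb).
Qed.

Lemma part_s p : inWp p -> in_l2 (dS_s g p).
Proof.
move=> hp; case: (hp) => hs ha.
have hb : forall k, k != 0 -> `|(fun k => - cKk k * (p.2 * F1 p.2 (Ex (cKk k) p.1))) k| <= M.
  move=> k hk; exact: (ptb (cK_ge0 hk) hs0 ha0 (ltW ha01) ha hs).2.1.
by case: (@coef_bnd (dS_s g p) (fun k => - cKk k * (p.2 * F1 p.2 (Ex (cKk k) p.1))) M M0 (fun k => rep_s k (p2pos hp)) hb).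
Qed.

Lemma part_a p : inWp p -> in_l2 (dS_a g p).
Proof.
move=> hp; case: (hp) => hs ha.
have hb : forall k, k != 0 -> `|(fun k => F1 p.2 (Ex (cKk k) p.1)) k| <= M.
  move=> k hk; exact: (ptb (cK_ge0 hk) hs0 ha0 (ltW ha01) ha hs).2.2.1.
by case: (@coef_bnd (dS_a g p) (fun k => F1 p.2 (Ex (cKk k) p.1)) M M0 (fun k => rep_a k (p2pos hp)) hb).
Qed.

Lemma part_ss p : inWp p -> in_l2 (dS_ss g p).
Proof.
move=> hp; case: (hp) => hs ha.
have hb : forall k, k != 0 -> `|(fun k => (- cKk k ^+ 2) * (p.2 * F2 p.2 (Ex (cKk k) p.1))) k| <= M.
  move=> k hk; exact: (ptb (cK_ge0 hk) hs0 ha0 (ltW ha01) ha hs).2.2.2.1.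
by case: (@coef_bnd (dS_ss g p) (fun k => (- cKk k ^+ 2) * (p.2 * F2 p.2 (Ex (cKk k) p.1))) M M0 (fun k => rep_ss k (p2pos hp)) hb).
Qed.

Lemma part_as p : inWp p -> in_l2 (dS_as g p).
Proof.
move=> hp; case: (hp) => hs ha.
have hb : forall k, k != 0 -> `|(fun k => cKk k * F2 p.2 (Ex (cKk k) p.1)) k| <= M.
  move=> k hk; exact: (ptb (cK_ge0 hk) hs0 ha0 (ltW ha01) ha hs).2.2.2.2.1.
by case: (@coef_bnd (dS_as g p) (fun k => cKk k * F2 p.2 (Ex (cKk k) p.1)) M M0 (fun k => rep_as k (p2pos hp)) hb).
Qed.

Lemma part_aa p : inWp p -> in_l2 (dS_aa g p).
Proof.
move=> hp; case: (hp) => hs ha.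
have hb : forall k, k != 0 -> `|(fun k => K2 p.2 (Ex (cKk k) p.1)) k| <= M.
  move=> k hk; exact: (ptb (cK_ge0 hk) hs0 ha0 (ltW ha01) ha hs).2.2.2.2.2.
by case: (@coef_bnd (dS_aa g p) (fun k => K2 p.2 (Ex (cKk k) p.1)) M M0 (fun k => rep_aa k (p2pos hp)) hb).
Qed.

Definition Wset := [set p : R * R | s0 <= p.1 <= s1 /\ a0 <= p.2 <= a1].

Lemma part2 p : inWp p -> frechet_within Wset (Ssol g) p (dS_s g p) (dS_a g p).
Proof.
move=> hp; case: (hp) => hs ha.
split; first exact: part_s.
split; first exact: part_a.
move=> e he.
have h2M : 0 <= 2 * M by apply: mulr_ge0 => //; exact: ler0n.
have CG : 0 < 2 * M * l2norm g + 1 by apply: ltr_wpDl => //; apply: mulr_ge0.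
exists (e / (2 * M * l2norm g + 1)); first by rewrite divr_gt0.
move=> h hW hN.
move: (hW); rewrite /Wset /Defs.shift /= => -[hs' ha'].
pose r k := F0 (p.2 + h.2) (Ex (cKk k) (p.1 + h.1)) - F0 p.2 (Ex (cKk k) p.1) -
   (h.1 * (- cKk k * (p.2 * F1 p.2 (Ex (cKk k) p.1))) + h.2 * F1 p.2 (Ex (cKk k) p.1)).
have hrep : forall k, Ssol g (Defs.shift p h) k - Ssol g p k -
    (h.1%:C * dS_s g p k + h.2%:C * dS_a g p k) = (r k)%:C * g k.
  move=> k; rewrite /Defs.shift repS' repS rep_s ?(p2pos hp) // rep_a ?(p2pos hp) //.
  by rewrite cplx1.
have B0 : 0 <= 2 * M * nrm2 h ^+ 2 by apply: mulr_ge0 => //; exact: sqr_ge0.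
have hb : forall k, k != 0 -> `|r k| <= 2 * M * nrm2 h ^+ 2.
  move=> k hk.
  have := remF (cK_ge0 hk) hs0 ha0 (ltW ha01) ha ha' hs hs'.
  have -> : p.1 + h.1 - p.1 = h.1 by ring.
  have -> : p.2 + h.2 - p.2 = h.2 by ring.
  by rewrite nrm2_sq.
have [H1 H2] := @coef_bnd _ r _ B0 hrep hb.
split => //.
apply: le_trans H2 _.
have := @fin_ineq (2 * M) (l2norm g) (nrm2 h) e 1 h2M G0 (nrm2_ge0 h) he ler01 hN.
by rewrite !mulr1.
Qed.

Lemma rep_s' s a k : 0 < a ->
  dS_s g (s, a) k = (- cKk k * (a * F1 a (Ex (cKk k) s)))%:C * g k.
Proof. exact: (@rep_s (s, a) k). Qed.

Lemma rep_a' s a k : 0 < a -> dS_a g (s, a) k = (F1 a (Ex (cKk k) s))%:C * g k.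
Proof. exact: (@rep_a (s, a) k). Qed.

Lemma part3 p : inWp p ->
  frechet2_within Wset (dS_s g) (dS_a g) p (dS_ss g p) (dS_as g p) (dS_aa g p).
Proof.
move=> hp; case: (hp) => hs ha.
split; first exact: part_ss.
split; first exact: part_as.
split; first exact: part_aa.
move=> e he.
have h4M : 0 <= 4 * M by apply: mulr_ge0 => //; exact: ler0n.
have CG : 0 < 4 * M * l2norm g + 1 by apply: ltr_wpDl => //; apply: mulr_ge0.
exists (e / (4 * M * l2norm g + 1)); first by rewrite divr_gt0.
move=> h hW hN q T.
move: (hW); rewrite /Wset /Defs.shift /= => -[hs' ha'].
have hpa := p2pos hp.
have hpa' : 0 < p.2 + h.2 by case/andP: ha' => h1 _; exact: lt_le_trans ha0 h1.
pose RA k := - cKk k * ((p.2 + h.2) * F1 (p.2 + h.2) (Ex (cKk k) (p.1 + h.1)))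
   - - cKk k * (p.2 * F1 p.2 (Ex (cKk k) p.1))
   - (h.1 * ((- cKk k ^+ 2) * (p.2 * F2 p.2 (Ex (cKk k) p.1)))
      + h.2 * (cKk k * F2 p.2 (Ex (cKk k) p.1))).
pose RB k := F1 (p.2 + h.2) (Ex (cKk k) (p.1 + h.1)) - F1 p.2 (Ex (cKk k) p.1)
   - (h.1 * (cKk k * F2 p.2 (Ex (cKk k) p.1))
      + h.2 * K2 p.2 (Ex (cKk k) p.1)).
pose r k := q.1 * RA k + q.2 * RB k.
have e1 : p.1 + h.1 - p.1 = h.1 by ring.
have e2 : p.2 + h.2 - p.2 = h.2 by ring.
have hrep : forall k, T k = (r k)%:C * g k.
  move=> k; rewrite /T /Defs.shift rep_s' // rep_s // rep_a' // rep_a //.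
  by rewrite rep_ss // rep_as // rep_aa // cplx2.
have N0 := nrm2_ge0 h; have Q0 := nrm2_ge0 q.
have B0 : 0 <= 4 * M * nrm2 h ^+ 2 * nrm2 q.
  by apply: mulr_ge0 => //; apply: mulr_ge0 => //; exact: sqr_ge0.
have hb : forall k, k != 0 -> `|r k| <= 4 * M * nrm2 h ^+ 2 * nrm2 q.
  move=> k hk.
  have hA := remA (cK_ge0 hk) hs0 ha0 (ltW ha01) ha ha' hs hs'.
  have hB := remB (cK_ge0 hk) hs0 ha0 (ltW ha01) ha ha' hs hs'.
  rewrite e1 e2 -nrm2_sq in hA hB.
  have hA' : `|RA k| <= 2 * M * nrm2 h ^+ 2 by rewrite /RA.
  have hB' : `|RB k| <= 2 * M * nrm2 h ^+ 2 by rewrite /RB.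
  rewrite /r; apply: le_trans (ler_normD _ _) _; rewrite !normrM.
  have q1 := nrm2_1 q; have q2 := nrm2_2 q.
  have n1 := normr_ge0 q.1; have n2 := normr_ge0 q.2.
  have nA := normr_ge0 (RA k); have nB := normr_ge0 (RB k).
  set X := 2 * M * nrm2 h ^+ 2 in hA' hB'.
  have -> : 4 * M * nrm2 h ^+ 2 * nrm2 q = 2 * X * nrm2 q by rewrite /X; ring.
  nra.
have [H1 H2] := @coef_bnd _ r _ B0 hrep hb.
split => //.
apply: le_trans H2 _.
exact: (@fin_ineq (4 * M) (l2norm g) (nrm2 h) e (nrm2 q) h4M G0 N0 he Q0 hN).
Qed.

End Main.
Theorem theorem2 (R : realType) (d : nat) (s0 s1 a0 a1 : R)
  (g : freq d -> R[i]) :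
  (1 <= d)%N -> 0 < s0 -> s0 < s1 -> 0 < a0 -> a0 < a1 ->
  in_l2 g -> g 0 = 0 ->
  let W := [set p : R * R | s0 <= p.1 <= s1 /\ a0 <= p.2 <= a1] in
  (forall p, W p -> in_l2 (Ssol g p)) /\
  (forall p, W p -> frechet_within W (Ssol g) p (dS_s g p) (dS_a g p)) /\
  (forall p, W p ->
     frechet2_within W (dS_s g) (dS_a g) p (dS_ss g p) (dS_as g p) (dS_aa g p)).
Proof.
move=> _ hs0 hs01 ha0 ha01 hg g0 W.
split; [|split] => p hp.
- exact: (@part1 R d s0 s1 a0 a1 g hs0 ha0 ha01 hg g0 p hp).
- exact: (@part2 R d s0 s1 a0 a1 g hs0 ha0 ha01 hg g0 p hp).
- exact: (@part3 R d s0 s1 a0 a1 g hs0 ha0 ha01 hg g0 p hp).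
Qed.
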